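(* Let $F$ be a field whose characteristic is not $2$, and let $k\geq 2$ be an integer. Then for every $x\in F$ there exist $a_1,\ldots,a_{2k}\in F$ such that $a_1+a_2+\cdots+a_{2k}=x=a_1a_2\cdots a_{2k}$. *)

(* Defs.v *)
From mathcomp Require Import all_boot all_order all_algebra.

(* Main.v *)
Require Import Defs.
From mathcomp Require Import all_boot all_order all_algebra.
From mathcomp Require Import ring zify.
Import GRing.Theory.
Local Open Scope ring_scope.

Section Aux.
Variable F : fieldType.
Variables b0 b1 b2 b3 : F.

Definition gg (i : nat) : F :=
  if i == 0%N then b0 else if i == 1%N then b1 else if i == 2%N then b2
  else if i == 3%N then b3 else if odd i then -1 else 1.

Lemma gg_sum m : \sum_(0 <= i < 4 + 2 * m) gg i = b0 + b1 + b2 + b3.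
Proof.
elim: m => [|m IH].
  by rewrite !big_nat_recr //= big_geq // add0r.
have -> : (4 + 2 * m.+1 = (4 + 2 * m).+2)%N by lia.
rewrite big_nat_recr //= big_nat_recr //= IH /gg /=.
rewrite add0n oddM /=; rewrite -addrA addrN addr0; done.
Qed.

Lemma gg_prod m : \prod_(0 <= i < 4 + 2 * m) gg i = b0 * b1 * b2 * b3 * (-1) ^+ m.
Proof.
elim: m => [|m IH].
  by rewrite !big_nat_recr //= big_geq // mul1r expr0 mulr1.
have -> : (4 + 2 * m.+1 = (4 + 2 * m).+2)%N by lia.
rewrite big_nat_recr //= big_nat_recr //= IH /gg /=.
rewrite add0n oddM /= exprS.
by rewrite mulr1 [-1 * _]mulrC mulrA.
Qed.

Lemma extend m x : b0 + b1 + b2 + b3 = x -> b0 * b1 * b2 * b3 * (-1) ^+ m = x ->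
  exists a : 'I_(2 * m.+2) -> F,
    \sum_(i < 2 * m.+2) a i = x /\ \prod_(i < 2 * m.+2) a i = x.
Proof.
move=> hs hp; exists (fun i => gg i).
have e : (2 * m.+2 = 4 + 2 * m)%N by lia.
split.
  by rewrite -(big_mkord xpredT gg) e gg_sum.
by rewrite -(big_mkord xpredT gg) e gg_prod.
Qed.
End Aux.

Theorem theorem1p3 (F : fieldType) (k : nat) (hchar : ~~ (2%N \in [pchar F]))
  (hk : (2 <= k)%N) (x : F) :
  exists a : 'I_(2 * k) -> F,
    \sum_(i < 2 * k) a i = x /\ \prod_(i < 2 * k) a i = x.
Proof.
move: hk; case: k => [|[|m]] // _.
set P : F := (-1) ^+ m.
have P2 : P * P = 1 by rewrite /P -exprMn mulrNN mulr1 expr1n.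
have P0 : P != 0 by apply/negP => /eqP h; move: P2; rewrite h mul0r => /eqP; rewrite eq_sym oner_eq0.
have two0 : (2 : F) != 0.
  apply/negP => /eqP h; move/negP: hchar; apply; apply/andP; split => //.
  by rewrite h.
case: (eqVneq x 0) => [->|x0].
  by apply: (@extend F 0 0 0 0 m 0); rewrite ?mul0r ?addr0.
case: (eqVneq x P) => [->|xP].
  case: (eqVneq (3 : F) 0) => [h3|h3].
    apply: (@extend F P P P P m P).
      have -> : P + P + P + P = P + 3 * P by ring.
      by rewrite h3 mul0r addr0.
    by rewrite -!mulrA P2 mulr1 !mulrA P2 mul1r.
  apply: (@extend F (P * (-3/2)) (P * (3/2)) (P * (4/3)) (P * (-1/3)) m P).
    by field; rewrite two0 h3.
  have -> : P * (-3 / 2) * (P * (3 / 2)) * (P * (4 / 3)) * (P * (-1 / 3)) * P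
     = (P * P) * (P * P) * P.
    by field; rewrite h3 two0.
  by rewrite P2 !mul1r.
set t := (x - P) / (P * x).
have t0 : t != 0 by rewrite /t mulf_neq0 // ?subr_eq0 // invr_eq0 mulf_neq0.
apply: (@extend F (x / (P * t)) (- t) t (- 1 / t) m x).
  rewrite /t; field.
  by rewrite P0 x0 subr_eq0 xP.
have -> : x / (P * t) * - t * t * (-1 / t) * P = x by field; rewrite P0 t0.
by [].
Qed.
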